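(* Let $S=\{R_0,\dots,R_d\}$ be a quasi-thin scheme on $X$, $\mathbb F$ a field, $x\in X$, $E_a^*=E_a^*(x)$, and let $\mathcal T_0$ be the $\mathbb F$-linear span of $\{E_i^*A_jE_\ell^*:R_i,R_j,R_\ell\in S\}$. Then $\mathcal T_0$ is a unital $\mathbb F$-subalgebra of $M_X(\mathbb F)$ if and only if there do not exist $R_u,R_v,R_w,R_y,R_z\in S$ with $k_u=k_v=k_w=k_y=k_z=2$ and $p_{uv}^w=p_{wy}^z=|R_{u'}R_z|=1$.
   Context: Let $X$ be a nonempty finite set. A scheme of class $d$ on $X$ is a partition $S=\{R_0,\dots,R_d\}$ of $X\times X$ into nonempty sets such that $R_0=\{(b,b):b\in X\}$; for each $c$ there is $c'$ with $R_{c'}=\{(f,e):(e,f)\in R_c\}$; and for all $i,j,k$ the intersection number $p_{ij}^k=|\{\ell\in X:(m,\ell)\in R_i,(\ell,n)\in R_j\}|$ does not depend on $(m,n)\in R_k$. The valency is $k_a=p_{aa'}^0$; quasi-thin means all $k_a\le2$; complex product $R_aR_b=\{R_c:p_{ab}^c>0\}$. For $y\in X$, $yR_a=\{z:(y,z)\in R_a\}$. $A_a\in M_X(\mathbb F)$ is the $(0,1)$ adjacency matrix of $R_a$ and $E_a^*(y)$ is the diagonal $(0,1)$-matrix with ones exactly at positions indexed by $yR_a$. *)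

(* Defs.v *)
From HB Require Import structures.
From mathcomp Require Import all_boot all_order all_algebra.
Set Implicit Arguments. Unset Strict Implicit. Unset Printing Implicit Defensive.
Import GRing.Theory.
Local Open Scope ring_scope.

(* The finite nonempty set X is 'I_n.+1.  A scheme of class d is encoded by
   its "relation index" function r : X -> X -> 'I_d.+1, where R_c = {(e,f) | r e f = c}. *)

Section Scheme.
Variables (n d : nat).
Notation X := 'I_n.+1.
Notation I := 'I_d.+1.
Variable r : X -> X -> I.

Definition pcount (i j : I) (m o : X) : nat :=
  #|[set l : X | (r m l == i) && (r l o == j)]|.

Definition is_scheme : Prop :=
  [/\ (forall c : I, exists m o : X, r m o = c),
      (forall m o : X, (r m o == ord0) = (m == o)),
      (forall c : I, exists c' : I, forall e f : X, (r e f == c) = (r f e == c')) &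
      (forall (i j k : I) (m o m' o' : X), r m o = k -> r m' o' = k ->
          pcount i j m o = pcount i j m' o')].

Definition pnum (i j k : I) : nat :=
  if [pick mo : X * X | r mo.1 mo.2 == k] is Some mo then pcount i j mo.1 mo.2 else 0%N.

Definition tr (c : I) : I :=
  if [pick mo : X * X | r mo.1 mo.2 == c] is Some mo then r mo.2 mo.1 else c.

Definition valency (a : I) : nat := pnum a (tr a) ord0.

Definition quasi_thin : Prop := forall a : I, (valency a <= 2)%N.

Definition cprod (a b : I) : {set I} := [set c : I | (0 < pnum a b c)%N].

Variable F : fieldType.

Definition adj (a : I) : 'M[F]_n.+1 := \matrix_(e, f) ((r e f == a)%:R).

Definition dualidem (x : X) (a : I) : 'M[F]_n.+1 :=
  \matrix_(e, f) (((e == f) && (r x e == a))%:R).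

(* T_0 : F-span of {E_i^* A_j E_l^*}, encoded (mxalgebra style) as a row space of
   vectorized matrices *)
Definition T0 (x : X) : 'A[F]_(n.+1) :=
  (\sum_(ijl : I * I * I)
     <<mxvec (dualidem x ijl.1.1 *m adj ijl.1.2 *m dualidem x ijl.2)>>)%MS.

(* V is a unital F-subalgebra of M_X(F): contains the identity and is closed
   under products (it is a subspace by construction) *)
Definition unital_subalgebra (V : 'A[F]_(n.+1)) : Prop :=
  (1%:M \in V)%MS /\
  (forall M N : 'M[F]_n.+1, (M \in V)%MS -> (N \in V)%MS -> (M *m N \in V)%MS).

End Scheme.

(* Main.v *)
Require Import Defs.
From mathcomp Require Import all_boot all_order all_algebra zify.
Set Implicit Arguments. Unset Strict Implicit. Unset Printing Implicit Defensive.


Section Comb.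
Variables (n d : nat).
Notation X := 'I_n.+1.
Notation I := 'I_d.+1.
Variable r : X -> X -> I.
Hypothesis Hsch : is_scheme r.

Lemma r0 m : r m m = ord0.
Proof. case: Hsch => _ H2 _ _; by apply/eqP; rewrite H2. Qed.

Lemma trP c e f : (r e f == c) = (r f e == tr r c).
Proof.
case: Hsch => H1 _ H3 _.
have [c' Hc'] := H3 c.
rewrite /tr; case: pickP => [mo /= Hmo|H0].
  by rewrite Hc'; move: Hmo; rewrite Hc' => /eqP ->.
have [m [o Hmo]] := H1 c; by move: (H0 (m, o)); rewrite /= Hmo eqxx.
Qed.

Lemma tr_eq e f : r f e = tr r (r e f).
Proof. by apply/eqP; rewrite -trP. Qed.

Lemma pnumE i j k m o : r m o = k -> pnum r i j k = pcount r i j m o.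
Proof.
case: Hsch => _ _ _ H4 Hk.
rewrite /pnum; case: pickP => [mo /= /eqP Hmo|H0].
  exact: H4 Hmo Hk.
by move: (H0 (m, o)); rewrite /= Hk eqxx.
Qed.

Lemma pc_const i j m o m' o' : r m o = r m' o' -> pcount r i j m o = pcount r i j m' o'.
Proof. case: Hsch => _ _ _ H4 E; exact: H4 E erefl. Qed.

Definition nb (e : X) (a : I) : {set X} := [set f | r e f == a].

Lemma valE e a : #|nb e a| = valency r a.
Proof.
rewrite /valency (pnumE a (tr r a) (r0 e)) /pcount; apply: eq_card => f.
by rewrite !inE -trP andbb.
Qed.

Lemma double_count (A B : {set X}) (P : X -> X -> bool) :
  \sum_(a in A) #|[set c in B | P a c]| = \sum_(c in B) #|[set a in A | P a c]|.
Proof.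
transitivity (\sum_(a in A) \sum_(c in B) (P a c : nat)).
  apply: eq_bigr => a _; rewrite -sum1_card big_mkcond [RHS]big_mkcond /=.
  by apply: eq_bigr => c _; rewrite inE; case: (c \in B); case: (P a c).
rewrite exchange_big /=; apply: eq_bigr => c _.
rewrite -sum1_card big_mkcond [RHS]big_mkcond /=.
by apply: eq_bigr => a _; rewrite inE; case: (a \in A); case: (P a c).
Qed.

Lemma val_tr t : valency r (tr r t) = valency r t.
Proof.
have := double_count setT setT (fun e f => r e f == t).
have E1 a : #|[set c in [set: X] | r a c == t]| = valency r t.
  by rewrite -(valE a); apply: eq_card => f; rewrite !inE.
have E2 c : #|[set a in [set: X] | r a c == t]| = valency r (tr r t).
  by rewrite -(valE c); apply: eq_card => f; rewrite !inE trP.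
rewrite (eq_bigr _ (fun a _ => E1 a)) (eq_bigr _ (fun a _ => E2 a)).
rewrite !sum_nat_const cardsT card_ord => /eqP; rewrite eqn_mul2l /= => /eqP //.
Qed.

End Comb.


Section FS.
Variable T : finType.

Lemma two (C : {set T}) c1 c2 e : #|C| = 2 -> c1 \in C -> c2 \in C -> c1 != c2 ->
  e \in C -> (e == c1) || (e == c2).
Proof.
move=> HC h1 h2 hne he.
have E : [set c1; c2] = C.
  apply/eqP; rewrite eqEcard HC cards2 hne andbT; apply/subsetP => z; rewrite !inE.
  by case/orP => /eqP ->.
by move: he; rewrite -E !inE.
Qed.

Lemma unif (C : {set T}) (P : pred T) :
  (forall c c', c \in C -> c' \in C -> P c = P c') ->
  #|[set c in C | P c]| = 0 \/ #|[set c in C | P c]| = #|C|.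
Proof.
move=> H; case: (pickP [pred c | (c \in C) && P c]) => [c0 /= /andP [h0 p0]|H0].
  right; apply: eq_card => z; rewrite !inE; case hz: (z \in C) => //=.
  by rewrite (H z c0).
left; apply/eqP; rewrite cards_eq0; apply/eqP/setP => z; rewrite !inE.
by have := H0 z; rewrite /= => ->.
Qed.

Lemma small (C S T0 S' T' : {set T}) : S \subset C -> T0 \subset C ->
  S' \subset C -> T' \subset C -> #|C| <= 2 -> #|S| = #|S'| -> #|T0| = #|T'| ->
  #|S :&: T0| != #|S' :&: T'| -> [/\ #|S| = 1, #|T0| = 1 & #|C| = 2].
Proof.
move=> sS sT sS' sT' hC eS eT hne.
have full (A : {set T}) : A \subset C -> #|A| = #|C| -> A = C.
  by move=> sA hA; apply/eqP; rewrite eqEcard sA hA leqnn.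
have empty (A : {set T}) : #|A| = 0 -> A = set0.
  by move/eqP; rewrite cards_eq0 => /eqP.
case: (posnP #|S|) => [h0|hS].
  move: hne; rewrite (empty _ h0) (empty S') -?eS // !set0I eqxx //.
case: (posnP #|T0|) => [h0|hT].
  move: hne; rewrite (empty _ h0) (empty T') -?eT // !setI0 eqxx //.
case: (eqVneq #|S| #|C|) => [hSC|hSC].
  move: hne; rewrite (full _ sS hSC) (full S') -?eS //.
  by rewrite (setIidPr sT) (setIidPr sT') eT eqxx.
case: (eqVneq #|T0| #|C|) => [hTC|hTC].
  move: hne; rewrite (full _ sT hTC) (full T') -?eT //.
  by rewrite (setIidPl sS) (setIidPl sS') eS eqxx.
have lS := subset_leq_card sS; have lT := subset_leq_card sT.
split; lia.
Qed.

Lemma card_sub1 (a : T) (P : pred T) : #|[set e in [set a] | P e]| = P a.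
Proof.
case: (boolP (P a)) => H.
  have -> : [set e in [set a] | P e] = [set a]; last by rewrite cards1.
  apply/setP => e; rewrite !inE.
  by case: eqP => // ->; rewrite H.
have -> : [set e in [set a] | P e] = set0; last by rewrite cards0.
apply/setP => e; rewrite !inE.
by case: eqP => // ->; rewrite (negbTE H).
Qed.

Lemma card_I1 (c e : T) : #|[set c] :&: [set e]| = (c == e).
Proof.
case: eqP => [->|H]; first by rewrite setIid cards1.
have -> : [set c] :&: [set e] = set0; last by rewrite cards0.
apply/setP => z; rewrite !inE.
by apply/negbTE/andP => [[/eqP -> /eqP]].
Qed.

End FS.


Section KL.
Variables (n d : nat).
Notation X := 'I_n.+1.
Notation I := 'I_d.+1.
Variable r : X -> X -> I.
Hypothesis Hsch : is_scheme r.
Hypothesis Hqt : quasi_thin r.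
Variable x : X.

Definition conf := exists u v w y z : 'I_d.+1,
       [/\ valency r u = 2%N, valency r v = 2%N, valency r w = 2%N,
           valency r y = 2%N & valency r z = 2%N] /\
       [/\ pnum r u v w = 1%N, pnum r w y z = 1%N &
           #|cprod r (tr r u) z| = 1%N].

Definition Ncnt (l0 j1 j2 : I) (a b : X) :=
  #|[set c | (r x c == l0) && (r a c == j1) && (r c b == j2)]|.

Lemma dc_const (A C : {set X}) (P : X -> X -> bool) k1 k2 :
  (forall e, e \in A -> #|[set c in C | P e c]| = k1) ->
  (forall c, c \in C -> #|[set e in A | P e c]| = k2) -> #|A| * k1 = #|C| * k2.
Proof.
move=> h1 h2; have := double_count A C P.
by rewrite (eq_bigr _ h1) (eq_bigr _ h2) !sum_nat_const.
Qed.

Section Fix.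
Variables l0 j1 j2 : I.
Let C := nb r x l0.
Let S a := [set c in C | r a c == j1].
Let T b := [set c in C | r c b == j2].

Lemma NcntE a b : Ncnt l0 j1 j2 a b = #|S a :&: T b|.
Proof. by apply: eq_card => c; rewrite !inE; case: (r x c == l0). Qed.

Lemma cardS a : #|S a| = pcount r l0 (tr r j1) x a.
Proof. by apply: eq_card => c; rewrite !inE (trP Hsch j1). Qed.

Lemma cardT b : #|T b| = pcount r l0 j2 x b.
Proof. by apply: eq_card => c; rewrite !inE. Qed.

Lemma NC1 a b : #|S a| = 1 -> #|nb r a j1| <= 1 -> Ncnt l0 j1 j2 a b = pcount r j1 j2 a b.
Proof.
move=> h1 h2.
have sub : nb r a j1 \subset S a.
  have : S a \subset nb r a j1 by apply/subsetP => c; rewrite !inE => /andP [].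
  move=> s; have -> // : S a = nb r a j1.
  by apply/eqP; rewrite eqEcard s h1 h2.
apply: eq_card => c; rewrite !inE.
case h: (r a c == j1); rewrite ?andbF //=.
have : c \in S a by apply: (subsetP sub); rewrite inE h.
by rewrite !inE => /andP [-> _].
Qed.

Lemma NC2 a b : #|T b| = 1 -> valency r j2 <= 1 -> Ncnt l0 j1 j2 a b = pcount r j1 j2 a b.
Proof.
move=> h1 h2.
have sub : [set e | r e b == j2] \subset T b.
  have s : T b \subset [set e | r e b == j2].
    by apply/subsetP => c; rewrite !inE => /andP [].
  have c2 : #|[set e | r e b == j2]| <= 1.
    rewrite -(val_tr Hsch j2) -(valE Hsch b) in h2.
    by move: h2; rewrite (_ : nb r b (tr r j2) = [set e | r e b == j2]) //;
       apply/setP => e; rewrite !inE -trP.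
  have -> // : T b = [set e | r e b == j2].
  by apply/eqP; rewrite eqEcard s h1 c2.
apply: eq_card => c; rewrite !inE.
case h: (r c b == j2); rewrite ?andbF //=.
have : c \in T b by apply: (subsetP sub); rewrite inE h.
by rewrite !inE => /andP [-> _]; rewrite andbT.
Qed.

Lemma KLmain a b a' b' : ~ conf -> r x a = r x a' -> r a b = r a' b' -> r x b = r x b' ->
  Ncnt l0 j1 j2 a b = Ncnt l0 j1 j2 a' b'.
Proof.
move=> nc ea eab eb; apply/eqP; apply/negPn/negP => hne; apply: nc.
set i := r x a; set j := r a b; set l := r x b.
have sS e : S e \subset C by apply/subsetP => c; rewrite inE => /andP [].
have sT e : T e \subset C by apply/subsetP => c; rewrite inE => /andP [].
have hC : #|C| <= 2 by rewrite /C valE //.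
have cS e : r x e = i -> #|S e| = #|S a|.
  by move=> he; rewrite !cardS; apply: pc_const => //; rewrite he.
have cT e : r x e = l -> #|T e| = #|T b|.
  by move=> he; rewrite !cardT; apply: pc_const => //; rewrite he.
move: hne; rewrite !NcntE => hne.
have [hS1 hT1 hC2] := small (sS a) (sT b) (sS a') (sT b') hC (esym (cS a' (esym ea)))
   (esym (cT b' (esym eb))) hne.
have S1 e : r x e = i -> #|S e| = 1 by move=> he; rewrite cS.
have T1 e : r x e = l -> #|T e| = 1 by move=> he; rewrite cT.
have [c0 Hc0] : exists c0, c0 \in S a.
  by apply/card_gt0P; rewrite hS1.
have c0C : c0 \in C by apply: (subsetP (sS a)).
have rxc e : e \in C -> r x e = l0 by rewrite inE => /eqP.
have Ai : valency r i = 2.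
  have le := Hqt i; case: (ltngtP (valency r i) 2) => [hlt|hgt|//]; last by move: le; rewrite leqNgt hgt.
  have Aa : nb r x i = [set a].
    apply/eqP; rewrite eq_sym eqEcard valE // cards1; rewrite -ltnS hlt andbT.
    by rewrite sub1set inE.
  have K c : c \in C -> pcount r i j1 x c = (r a c == j1).
    move=> hc; rewrite -(card_sub1 a (fun e => r e c == j1)) -Aa.
    by apply: eq_card => e; rewrite !inE.
  have U : forall c c', c \in C -> c' \in C -> (r a c == j1) = (r a c' == j1).
    move=> c c' hc hc'; have := K c hc; have := K c' hc'.
    rewrite (pc_const Hsch _ _ (_ : r x c = r x c')); last by rewrite !rxc.
    by move=> -> /eqP; case: (r a c == j1); case: (r a c' == j1).
  by case: (unif U) => /=; rewrite -/(S a) hS1 ?hC2.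
have Bl : valency r l = 2.
  have le := Hqt l; case: (ltngtP (valency r l) 2) => [hlt|hgt|//]; last by move: le; rewrite leqNgt hgt.
  have Bb : nb r x l = [set b].
    apply/eqP; rewrite eq_sym eqEcard valE // cards1; rewrite -ltnS hlt andbT.
    by rewrite sub1set inE.
  have K c : c \in C -> pcount r j2 (tr r l) c x = (r c b == j2).
    move=> hc; rewrite -(card_sub1 b (fun e => r c e == j2)) -Bb.
    by apply: eq_card => e; rewrite !inE -trP // andbC.
  have U : forall c c', c \in C -> c' \in C -> (r c b == j2) = (r c' b == j2).
    move=> c c' hc hc'; have := K c hc; have := K c' hc'.
    rewrite (pc_const Hsch _ _ (_ : r c x = r c' x)); last by rewrite (tr_eq Hsch x c) (tr_eq Hsch x c') !rxc.
    by move=> -> /eqP; case: (r c b == j2); case: (r c' b == j2).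
  by case: (unif U) => /=; rewrite -/(T b) hT1 ?hC2.
have Cl0 : valency r l0 = 2 by rewrite -(valE Hsch x).
have Vj1 : valency r j1 = 2.
  have le := Hqt j1; case: (ltngtP (valency r j1) 2) => [hlt|hgt|//]; last by move: le; rewrite leqNgt hgt.
  move: hne; rewrite -!NcntE !NC1 ?valE ?S1 //.
  by rewrite (pc_const Hsch _ _ eab) eqxx.
have Vj2 : valency r j2 = 2.
  have le := Hqt j2; case: (ltngtP (valency r j2) 2) => [hlt|hgt|//]; last by move: le; rewrite leqNgt hgt.
  move: hne; rewrite -!NcntE !NC2 ?T1 //.
  by rewrite (pc_const Hsch _ _ eab) eqxx.
set A := nb r x i; set B := nb r x l.
have cA : #|A| = 2 by rewrite /A valE.
have cB : #|B| = 2 by rewrite /B valE.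
have aA : a \in A by rewrite inE.
have a'A : a' \in A by rewrite inE -ea.
have bB : b \in B by rewrite inE.
have b'B : b' \in B by rewrite inE -eb.
have inA e : e \in A -> r x e = i by rewrite inE => /eqP.
have inB e : e \in B -> r x e = l by rewrite inE => /eqP.
have p1 c : c \in C -> #|[set e in A | r e c == j1]| = 1.
  have K c' : c' \in C -> #|[set e in A | r e c' == j1]| = pcount r i j1 x c0.
    move=> hc'; rewrite (pc_const Hsch _ _ (_ : r x c0 = r x c')); last by rewrite !rxc.
    by apply: eq_card => e; rewrite !inE.
  move=> hc; rewrite K //.
  have := dc_const (P := fun e c => r e c == j1) (k1 := 1) (fun e he => S1 e (inA e he)) K.
  by rewrite cA hC2 => /eqP; rewrite eqn_mul2l /= => /eqP.
have p2 c : c \in C -> #|[set e in B | r c e == j2]| = 1.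
  have K c' : c' \in C -> #|[set e in B | r c' e == j2]| = pcount r j2 (tr r l) c0 x.
    move=> hc'; rewrite (pc_const Hsch _ _ (_ : r c0 x = r c' x)); last first.
      by rewrite (tr_eq Hsch x c0) (tr_eq Hsch x c') !rxc.
    by apply: eq_card => e; rewrite !inE -trP // andbC.
  move=> hc; rewrite K //.
  have := dc_const (P := fun e c => r c e == j2) (k1 := 1) (fun e he => T1 e (inB e he)) K.
  by rewrite cB hC2 => /eqP; rewrite eqn_mul2l /= => /eqP.
have P1 : pnum r i j1 l0 = 1.
  by rewrite (pnumE Hsch _ _ (rxc c0 c0C)) -(p1 c0 c0C); apply: eq_card => e; rewrite !inE.
have P2 : pnum r l0 j2 l = 1.
  by rewrite (pnumE Hsch _ _ (erefl (r x b))) -cardT.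
have [a0 [Ha0 Hall]] : exists a0, r x a0 = i /\ forall e, r x e = l -> r a0 e = j.
  case: (eqVneq a a') => [eaa|naa].
    case: (eqVneq b b') => [ebb|nbb].
      by move: hne; rewrite eaa ebb eqxx.
    exists a; split => // e he.
    have eB : e \in B by rewrite inE he.
    case/orP: (two cB bB b'B nbb eB) => /eqP ->; first by [].
    by rewrite eaa -eab.
  case: (eqVneq b b') => [ebb|nbb].
    exists a; split => // e he.
    have Ke e' : r x e' = l -> #|[set f in A | r f e' == j]| = pcount r i j x e'.
      by move=> _; apply: eq_card => f; rewrite !inE.
    have Eb : [set f in A | r f b == j] = A.
      apply/setP => f; rewrite !inE; case hf: (r x f == i) => //=.
      have fA : f \in A by rewrite inE hf.
      case/orP: (two cA aA a'A naa fA) => /eqP ->; first by rewrite /j eqxx.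
      by rewrite ebb -eab /j eqxx.
    have Ee : [set f in A | r f e == j] = A.
      apply/eqP; rewrite eqEcard; apply/andP; split.
        by apply/subsetP => f; rewrite inE => /andP [].
      rewrite Ke // -(pc_const Hsch _ _ (_ : r x b = r x e)) ?he //.
      by rewrite -Ke // Eb.
    by move: aA; rewrite -Ee inE => /andP [_ /eqP].
  exfalso.
  have [c Sa] := cards1P (introT eqP hS1).
  have [c' Sa'] := cards1P (introT eqP (S1 a' (esym ea))).
  have [dd Tb] := cards1P (introT eqP hT1).
  have [dd' Tb'] := cards1P (introT eqP (T1 b' (esym eb))).
  have cC : c \in C by apply: (subsetP (sS a)); rewrite Sa set11.
  have c'C : c' \in C by apply: (subsetP (sS a')); rewrite Sa' set11.
  have dC : dd \in C by apply: (subsetP (sT b)); rewrite Tb set11.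
  have d'C : dd' \in C by apply: (subsetP (sT b')); rewrite Tb' set11.
  have rac : r a c == j1 by move: (set11 c); rewrite -Sa inE => /andP [].
  have ra'c' : r a' c' == j1 by move: (set11 c'); rewrite -Sa' inE => /andP [].
  have rdb : r dd b == j2 by move: (set11 dd); rewrite -Tb inE => /andP [].
  have rd'b' : r dd' b' == j2 by move: (set11 dd'); rewrite -Tb' inE => /andP [].
  have ncc : c != c'.
    apply/eqP => ecc; have := p1 c cC.
    have : [set a; a'] \subset [set e in A | r e c == j1].
      apply/subsetP => e; rewrite !inE => /orP [] /eqP ->.
        by rewrite rac /i eqxx.
      by rewrite -ea ecc ra'c' /i eqxx.
    by move/subset_leq_card; rewrite cards2 naa => /[swap] ->.
  have ndd : dd != dd'.
    apply/eqP => edd; have := p2 dd dC.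
    have : [set b; b'] \subset [set e in B | r dd e == j2].
      apply/subsetP => e; rewrite !inE => /orP [] /eqP ->.
        by rewrite rdb /l eqxx.
      by rewrite -eb edd rd'b' /l eqxx.
    by move/subset_leq_card; rewrite cards2 nbb => /[swap] ->.
  move: hne; rewrite Sa Sa' Tb Tb' !card_I1.
  case/orP: (two hC2 cC c'C ncc dC) => /eqP Ed; rewrite Ed.
    case/orP: (two hC2 cC c'C ncc d'C) => /eqP Ed'; rewrite Ed' ?eqxx //.
    by move: ndd; rewrite Ed Ed' eqxx.
  case/orP: (two hC2 cC c'C ncc d'C) => /eqP Ed'; rewrite Ed' ?eqxx.
    by rewrite [c' == c]eq_sym eqxx.
  by move: ndd; rewrite Ed Ed' eqxx.
have Hcp : cprod r (tr r i) l = [set j].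
  apply/setP => t; rewrite /cprod !inE; apply/idP/eqP.
    rewrite /pnum; case: pickP => [mo /eqP Hmo|_] //.
    move/card_gt0P => [e]; rewrite inE => /andP [/eqP h1 /eqP h2].
    have : 0 < pcount r t (tr r l) mo.1 e.
      by apply/card_gt0P; exists mo.2; rewrite inE Hmo eqxx /= -trP // h2.
    rewrite (pc_const Hsch _ _ (_ : r mo.1 e = r a0 x)); last by rewrite h1 (tr_eq Hsch x a0) Ha0.
    move/card_gt0P => [o]; rewrite inE => /andP [/eqP <- ].
    by rewrite -trP // => /eqP /Hall.
  move=> ->; rewrite (pnumE Hsch _ _ (Hall b (erefl _))).
  by apply/card_gt0P; exists x; rewrite inE -trP // Ha0 !eqxx.
exists i, j1, l0, j2, l; split; split => //.
by rewrite Hcp cards1.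
Qed.

End Fix.

Lemma confwit u v w y z : valency r u = 2 -> valency r w = 2 -> valency r z = 2 ->
  pnum r u v w = 1 -> pnum r w y z = 1 -> #|cprod r (tr r u) z| = 1 ->
  exists a b b', [/\ r x a = u, r x b = z, r x b' = z & r a b = r a b'] /\
    (Ncnt w v y a b = 1 /\ Ncnt w v y a b' = 0).
Proof.
move=> ku kw kz P1 P2 Pc.
set A := nb r x u; set C := nb r x w; set B := nb r x z.
have cA : #|A| = 2 by rewrite /A valE.
have cB : #|B| = 2 by rewrite /B valE.
have cC : #|C| = 2 by rewrite /C valE.
have [a aA] : exists a, a \in A by apply/card_gt0P; rewrite cA.
have rxa : r x a = u by move: aA; rewrite inE => /eqP.
have K1 c : c \in C -> #|[set e in A | r e c == v]| = 1.
  move=> hc; rewrite -P1 (pnumE Hsch _ _ (_ : r x c = w)); last by move: hc; rewrite inE => /eqP.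
  by apply: eq_card => e; rewrite !inE.
have K2 e : e \in A -> #|[set c in C | r e c == v]| = pcount r w (tr r v) x a.
  move=> he; rewrite (pc_const Hsch _ _ (_ : r x a = r x e)); last first.
    by move: he; rewrite inE => /eqP ->.
  by apply: eq_card => c; rewrite !inE (trP Hsch v).
have al : pcount r w (tr r v) x a = 1.
  have := dc_const K2 K1; rewrite cA cC => /eqP; rewrite eqn_mul2l /= => /eqP //.
have [c Sa] := cards1P (introT eqP (etrans (K2 a aA) al)).
have cCC : c \in C by move: (set11 c); rewrite -Sa inE => /andP [].
have rcx : r c x = tr r w.
  by rewrite (tr_eq Hsch x c); move: cCC; rewrite inE => /eqP ->.
have K3 c' : c' \in C -> #|[set e in B | r c' e == y]| = pcount r y (tr r z) c x.
  move=> hc'; rewrite (pc_const Hsch _ _ (_ : r c x = r c' x)); last first.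
    by rewrite rcx (tr_eq Hsch x c'); move: hc'; rewrite inE => /eqP ->.
  by apply: eq_card => e; rewrite !inE -trP // andbC.
have K4 e : e \in B -> #|[set c0 in C | r c0 e == y]| = 1.
  move=> he; rewrite -P2 (pnumE Hsch _ _ (_ : r x e = z)); last by move: he; rewrite inE => /eqP.
  by apply: eq_card => c0; rewrite !inE.
have ga : pcount r y (tr r z) c x = 1.
  have := dc_const (P := fun e c0 => r c0 e == y) K4 K3.
  by rewrite cB cC => /eqP; rewrite eqn_mul2l /= => /eqP.
have [b Tc] := cards1P (introT eqP (etrans (K3 c cCC) ga)).
have bB : b \in B by move: (set11 b); rewrite -Tc inE => /andP [].
have rcb : r c b == y by move: (set11 b); rewrite -Tc inE => /andP [].
have [b' b'B] : exists b', b' \in B :\ b.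
  apply/card_gt0P; move: cB; rewrite (cardsD1 b) bB; lia.
move: b'B; rewrite !inE => /andP [nb' b'B'].
have b'B : b' \in B by rewrite inE.
have rcb' : r c b' != y.
  apply/negP => h; have : b' \in [set e in B | r c e == y] by rewrite inE b'B h.
  by rewrite Tc inE (negbTE nb').
have NE b0 : Ncnt w v y a b0 = (r c b0 == y).
  rewrite -(card_sub1 c (fun c0 => r c0 b0 == y)) -Sa.
  by apply: eq_card => c0; rewrite !inE.
have [t0 Ht0] := cards1P (introT eqP Pc).
have inP e : e \in B -> r a e = t0.
  move=> he; apply/eqP; rewrite -in_set1 -Ht0 inE (pnumE Hsch _ _ (erefl (r a e))).
  apply/card_gt0P; exists x; rewrite inE -trP // rxa eqxx /=.
  by move: he; rewrite inE.
exists a, b, b'; split; split => //.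
- by move: bB; rewrite inE => /eqP.
- by move: b'B; rewrite inE => /eqP.
- by rewrite !inP.
- by rewrite NE rcb.
- by rewrite NE (negbTE rcb').
Qed.

End KL.

Import GRing.Theory.

Section Mx.
Local Open Scope ring_scope.
Variables (n d : nat).
Notation X := 'I_n.+1.
Notation I := 'I_d.+1.
Variable r : X -> X -> I.
Hypothesis Hsch : is_scheme r.
Variable F : fieldType.
Variable x : X.

Definition Bm (i j l : I) : 'M[F]_n.+1 := dualidem r F x i *m adj r F j *m dualidem r F x l.

Lemma mulD_r (M : 'M[F]_n.+1) l a b : (M *m dualidem r F x l) a b = M a b * (r x b == l)%:R.
Proof.
rewrite mxE (bigD1 b) //= big1 => [|k nk]; last by rewrite mxE (negbTE nk) mulr0.
by rewrite mxE eqxx addr0.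
Qed.

Lemma mulD_l (M : 'M[F]_n.+1) i a b : (dualidem r F x i *m M) a b = (r x a == i)%:R * M a b.
Proof.
rewrite mxE (bigD1 a) //= big1 => [|k nk]; last by rewrite mxE eq_sym (negbTE nk) mul0r.
by rewrite mxE eqxx addr0.
Qed.

Lemma BE i j l a b : Bm i j l a b = ((r x a == i) && (r a b == j) && (r x b == l))%:R.
Proof.
rewrite /Bm mulD_r mulD_l mxE.
by case: (r x a == i); case: (r a b == j); case: (r x b == l);
   rewrite /= ?mul1r ?mul0r ?mulr0 ?mulr1.
Qed.

Definition cellc (M : 'M[F]_n.+1) := forall a b a' b', r x a = r x a' -> r a b = r a' b' ->
  r x b = r x b' -> M a b = M a' b'.

Lemma sum_delta m (v : 'rV[F]_m) (k0 : 'I_m) :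
  \sum_k v 0 k * (k == k0)%:R = v 0 k0.
Proof.
rewrite (bigD1 k0) //= big1 => [|k nk]; last by rewrite (negbTE nk) mulr0.
by rewrite eqxx mulr1 addr0.
Qed.

Lemma T0_cell M : (M \in T0 r F x)%MS -> cellc M.
Proof.
move=> HM a b a' b' e1 e2 e3.
pose K : 'cV[F]_(n.+1 * n.+1) :=
  \col_k ((k == mxvec_index a b)%:R - (k == mxvec_index a' b')%:R).
have key N : (mxvec N *m K) 0 0 = N a b - N a' b'.
  rewrite mxE; under eq_bigr do rewrite mxE mulrBr.
  by rewrite sumrB !sum_delta !mxvecE.
have sub : (T0 r F x <= kermx K)%MS.
  apply/sumsmx_subP => t _; rewrite genmxE; apply/sub_kermxP.
  apply/matrixP => i0 j0; rewrite !ord1 key [RHS]mxE.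
  by rewrite -/(Bm t.1.1 t.1.2 t.2) !BE e1 e2 e3 subrr.
have := submx_trans HM sub => /sub_kermxP /matrixP /(_ 0 0).
by rewrite key mxE => /eqP; rewrite subr_eq0 => /eqP.
Qed.

Lemma Bm_in t : (Bm t.1.1 t.1.2 t.2 \in T0 r F x)%MS.
Proof.
rewrite /T0; apply: (sumsmx_sup t) => //; rewrite genmxE //.
Qed.

Lemma cell_T0 M : cellc M -> (M \in T0 r F x)%MS.
Proof.
move=> HM.
pose cf (t : I * I * I) : F :=
  if [pick p : X * X | (r x p.1 == t.1.1) && (r p.1 p.2 == t.1.2) && (r x p.2 == t.2)]
  is Some p then M p.1 p.2 else 0.
have E : M = \sum_(t : I * I * I) cf t *: Bm t.1.1 t.1.2 t.2.
  apply/matrixP => a b; rewrite summxE.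
  rewrite (bigD1 ((r x a, r a b), r x b)) //= big1 => [|t nt].
    rewrite mxE BE !eqxx mulr1 addr0 /cf.
    case: pickP => [p /= /andP [/andP [/eqP h1 /eqP h2] /eqP h3]|H0].
      by apply: HM.
    by have := H0 (a, b); rewrite /= !eqxx.
  rewrite mxE BE; case Hb : (_ && _ && _); last by rewrite mulr0.
  move: Hb => /andP [/andP [/eqP h1 /eqP h2] /eqP h3].
  by move: nt; rewrite h1 h2 h3 -!surjective_pairing eqxx.
have mxvecZ c (A : 'M[F]_n.+1) : mxvec (c *: A) = c *: mxvec A.
  by apply/rowP; case/mxvec_indexP => i j; rewrite mxE !mxvecE mxE.
have mxvecS (G : I * I * I -> 'M[F]_n.+1) : mxvec (\sum_t G t) = \sum_t mxvec (G t).
  apply/rowP; case/mxvec_indexP => i j; rewrite mxvecE !summxE.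
  by apply: eq_bigr => t _; rewrite mxvecE.
rewrite E mxvecS; apply: summx_sub => t _; rewrite mxvecZ; apply: scalemx_sub.
exact: Bm_in.
Qed.

Lemma prodE u v w y z a b : r x a = u -> r x b = z ->
  (Bm u v w *m Bm w y z) a b = (Ncnt r x w v y a b)%:R.
Proof.
move=> ha hb; rewrite mxE.
under eq_bigr do rewrite !BE.
rewrite ha hb !eqxx /=.
rewrite /Ncnt -sum1_card natr_sum [RHS]big_mkcond /=.
apply: eq_bigr => c _; rewrite inE.
by case: (r x c == w); case: (r a c == v); case: (r c b == y); rewrite /= ?mulr1 ?mulr0 ?mul0r.
Qed.

Lemma cell1 : cellc 1%:M.
Proof.
case: Hsch => _ H2 _ _.
move=> a b a' b' _ e2 _; rewrite !mxE -H2 e2 H2 //.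
Qed.

Hypothesis Hqt : quasi_thin r.

Lemma cellM M N : ~ conf r -> cellc M -> cellc N -> cellc (M *m N).
Proof.
move=> nc hM hN a b a' b' e1 e2 e3; rewrite !mxE.
rewrite [LHS](partition_big (fun c => ((r x c, r a c), r c b)) predT) //.
rewrite [RHS](partition_big (fun c => ((r x c, r a' c), r c b')) predT) //.
apply: eq_bigr => [[[l0 j1] j2]] _.
have KL := @KLmain n d r Hsch Hqt x l0 j1 j2 a b a' b' nc e1 e2 e3.
have G a0 b0 : \sum_(c | true && (((r x c, r a0 c), r c b0) == ((l0,j1),j2))) M a0 c * N c b0 =
  if [pick c | (r x c == l0) && (r a0 c == j1) && (r c b0 == j2)] is Some c0
  then (M a0 c0 * N c0 b0) *+ Ncnt r x l0 j1 j2 a0 b0 else 0.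
  case: pickP => [c0 /andP [/andP [/eqP h1 /eqP h2] /eqP h3]|H0].
    rewrite (eq_bigr (fun _ => M a0 c0 * N c0 b0)); last first.
      move=> c; rewrite /= !xpair_eqE => /andP [/andP [/eqP k1 /eqP k2] /eqP k3].
      congr (_ * _).
        by apply: hM; rewrite ?k1 ?k2 ?h1 ?h2.
      by apply: hN; rewrite ?k1 ?k3 ?h1 ?h3.
    rewrite (eq_bigl (fun c => c \in [set c | (r x c == l0) && (r a0 c == j1) && (r c b0 == j2)])).
      by rewrite sumr_const.
    by move=> c; rewrite /= inE !xpair_eqE.
  rewrite big1 // => c; rewrite /= !xpair_eqE => hc.
  by have := H0 c; rewrite /= hc.
rewrite !G.
case: pickP => [c0 /andP [/andP [/eqP h1 /eqP h2] /eqP h3]|H0];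
case: pickP => [c0' /andP [/andP [/eqP h1' /eqP h2'] /eqP h3']|H0'] //.
- rewrite KL; congr (_ *+ _); congr (_ * _).
    by apply: hM; rewrite ?h1 ?h2 ?h1' ?h2'.
  by apply: hN; rewrite ?h1 ?h3 ?h1' ?h3'.
- exfalso; move: KL; rewrite /Ncnt.
  rewrite (_ : [set c | (r x c == l0) && (r a' c == j1) && (r c b' == j2)] = set0).
    by rewrite cards0 => /eqP; rewrite cards_eq0 => /eqP /setP /(_ c0); rewrite !inE h1 h2 h3 !eqxx.
  by apply/setP => c; rewrite !inE; have := H0' c.
- exfalso; move: KL; rewrite /Ncnt.
  rewrite (_ : [set c | (r x c == l0) && (r a c == j1) && (r c b == j2)] = set0).
    by rewrite cards0 => /esym /eqP; rewrite cards_eq0 => /eqP /setP /(_ c0'); rewrite !inE h1' h2' h3' !eqxx.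
  by apply/setP => c; rewrite !inE; have := H0 c.
Qed.

End Mx.

Unset Implicit Arguments. Set Strict Implicit.

Import GRing.Theory.

Theorem lemma4p9 (F : fieldType) (n d : nat)
    (r : 'I_n.+1 -> 'I_n.+1 -> 'I_d.+1)
    (Hsch : is_scheme r) (Hqt : quasi_thin r) (x : 'I_n.+1) :
  unital_subalgebra (@T0 n d r F x) <->
  ~ (exists u v w y z : 'I_d.+1,
       [/\ valency r u = 2%N, valency r v = 2%N, valency r w = 2%N,
           valency r y = 2%N & valency r z = 2%N] /\
       [/\ pnum r u v w = 1%N, pnum r w y z = 1%N &
           #|cprod r (tr r u) z| = 1%N]).
Proof.
split.
- move=> [_ clos] [u [v [w [y [z [[ku kv kw ky kz] [P1 P2 Pc]]]]]]].
  have [a [b [b' [[ha hb hb' hab] [N1 N0]]]]] := confwit Hsch x ku kw kz P1 P2 Pc.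
  have PM := clos _ _ (Bm_in r F x ((u,v),w)) (Bm_in r F x ((w,y),z)).
  have := T0_cell PM (erefl (r x a)) hab (etrans hb (esym hb')).
  rewrite /= !(prodE F v w y) // N1 N0 => /eqP.
  by rewrite GRing.mulr1n GRing.mulr0n GRing.oner_eq0.
- move=> nc; split.
  + apply: cell_T0. exact: (@cell1 n d r Hsch F x).
  + move=> M N hM hN; apply: cell_T0; apply: (cellM Hsch Hqt) => //; exact: T0_cell.
Qed.
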